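(* Let $A=\{2^{i+1}-1 : i\ge 0\}=\{1,3,7,15,\dots\}$. Then for every $n\ge 1$, $\mathrm{Total}(n,A)=2^n-n$.
   Context: For an integer $n\ge 0$ and a set $A$ of positive integers with $1\in A$, the abstract generalized 2048 game $\mathrm{AGG}(n,A)$ is played on $n$ indistinguishable cells. A position assigns to each cell either nothing (empty) or a tile with a value in $A$; the initial position has all cells empty. A step, performable from any position with at least one empty cell, consists of: (i) placing a new tile of value $1$ into a chosen empty cell; then (ii) optionally choosing pairwise disjoint sets of nonempty cells, each with tile-value sum in $A$, and merging each set into a single tile of that sum placed in one of its cells, the other cells of the set becoming empty. The game ends when after a step all cells are nonempty. A position is reachable if obtainable from the initial position by finitely many steps; its total value is the sum of its tile values. $\mathrm{Total}(n,A)$ is the supremum of total values of reachable positions of $\mathrm{AGG}(n,A)$. *)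

(* Defs.v *)
From mathcomp Require Import all_boot.
Set Implicit Arguments. Unset Strict Implicit. Unset Printing Implicit Defensive.

(* A position of AGG(n,A) on n indistinguishable cells is represented by the
   list of the values of its tiles (order irrelevant); the number of empty
   cells is n - size p.  The initial position is [::]. *)

(* One step from p to q: p has an empty cell; a tile 1 is placed (giving 1 :: p);
   then the tiles of 1 :: p are split into untouched tiles [rest] and
   pairwise disjoint nonempty sets [groups] of tiles, each with sum in A;
   each group is merged into a single tile of value its sum. *)
Definition agg_step (n : nat) (A : nat -> Prop) (p q : seq nat) : Prop :=
  size p < n /\
  exists (rest : seq nat) (groups : seq (seq nat)),
    perm_eq (1 :: p) (rest ++ flatten groups) /\
    (forall g, g \in groups -> g != [::] /\ A (sumn g)) /\
    q = rest ++ map sumn groups.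

Inductive agg_reachable (n : nat) (A : nat -> Prop) : seq nat -> Prop :=
  | agg_reach_init : agg_reachable n A [::]
  | agg_reach_step p q : agg_reachable n A p -> agg_step n A p q ->
      agg_reachable n A q.

(* Total(n,A) = v  (v a natural number): v is the supremum of the total values
   of reachable positions; for a set of naturals this means v is an upper
   bound that is attained. *)
Definition Total_is (n : nat) (A : nat -> Prop) (v : nat) : Prop :=
  (forall p, agg_reachable n A p -> sumn p <= v) /\
  (exists p, agg_reachable n A p /\ sumn p = v).

Definition A_mersenne : nat -> Prop := fun m => exists i, m = 2 ^ i.+1 - 1.

(* Main.v *)
Require Import Defs.
From mathcomp Require Import all_boot.
From mathcomp Require Import zify.

Definition psi (s v : nat) := minn v (2 ^ s - 1).
Definition Psi (s : nat) (p : seq nat) := sumn (map (psi s) p).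
Definition cnt (s : nat) (p : seq nat) := count (fun v => 2 ^ s - 1 <= v) p.
Fixpoint U (n s : nat) : nat :=
  match s with 0 => 0 | s'.+1 => U n s' + 2 ^ s'.+1 * (n - s'.+2) end.

Lemma exp_cases s i : 2 ^ i.+1 <= 2 ^ s \/ 2 * 2 ^ s <= 2 ^ i.+1.
Proof.
case: (leqP i.+1 s) => h.
- by left; apply: leq_pexp2l.
- by right; rewrite -expnS; apply: leq_pexp2l.
Qed.

Lemma psi_step s v : A_mersenne v ->
  psi s.+1 v = psi s v + 2 ^ s * (2 ^ s.+1 - 1 <= v).
Proof.
move=> [i ->]; rewrite /psi.
have e := expnS 2 s.
have h1 := expn_gt0 2 s. have h2 := expn_gt0 2 i.+1.
case: (exp_cases s i) => h.
- have -> : (2 ^ s.+1 - 1 <= 2 ^ i.+1 - 1) = false by apply/negbTE; lia.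
  lia.
- have -> : (2 ^ s.+1 - 1 <= 2 ^ i.+1 - 1) = true by apply/idP; lia.
  lia.
Qed.

Lemma Psi_step s p : (forall x, x \in p -> A_mersenne x) ->
  Psi s.+1 p = Psi s p + 2 ^ s * cnt s.+1 p.
Proof.
move=> H0; elim: p H0 => [|x p IH] H; first by rewrite /Psi /cnt /= muln0.
rewrite /Psi /cnt /= -/(Psi s.+1 p) -/(Psi s p) -/(cnt s.+1 p).
rewrite IH; last by move=> y hy; apply: H; rewrite inE hy orbT.
rewrite psi_step; last by apply: H; rewrite inE eqxx.
rewrite mulnDr; lia.
Qed.

Lemma Psi0 p : Psi 0 p = 0.
Proof. by elim: p => //= x p IH; rewrite /Psi /= -/(Psi 0 p) IH /psi minn0. Qed.

Lemma Psi_bound n p : (forall x, x \in p -> A_mersenne x) ->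
  (forall s, cnt s.+2 p <= n - s.+2) ->
  forall s, Psi s.+1 p <= size p + U n s.
Proof.
move=> HA Hc; elim=> [|s IH].
- rewrite Psi_step // Psi0 /= mul1n addn0 add0n /cnt; exact: count_size.
- rewrite Psi_step //= addnA; apply: leq_add => //.
  by apply: leq_mul.
Qed.

Lemma Psi_lower s p : (2 ^ s - 1) * cnt s p <= Psi s p.
Proof.
elim: p => [|x p IH]; first by rewrite muln0.
rewrite /Psi /cnt /= -/(Psi s p) -/(cnt s p).
rewrite mulnDr; apply: leq_add => //; rewrite /psi.
case: (2 ^ s - 1 <= x) /idP => /= h; lia.
Qed.

Lemma psi_sub s g : psi s (sumn g) <= Psi s g.
Proof.
elim: g => [|x g IH] /=; first by rewrite /Psi /psi /= min0n.
rewrite /Psi /= -/(Psi s g); move: IH; rewrite /psi; lia.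
Qed.

Lemma Psi_cat s a b : Psi s (a ++ b) = Psi s a + Psi s b.
Proof. by rewrite /Psi map_cat sumn_cat. Qed.

Lemma Psi_perm s a b : perm_eq a b -> Psi s a = Psi s b.
Proof. by move=> h; rewrite /Psi; apply: perm_sumn; apply: perm_map. Qed.

Lemma Psi_flatten s gs : Psi s (flatten gs) = sumn (map (Psi s) gs).
Proof. by elim: gs => [|g gs IH] //=; rewrite Psi_cat IH. Qed.

Lemma Psi_merge s gs : Psi s (map sumn gs) <= sumn (map (Psi s) gs).
Proof.
elim: gs => [|g gs IH] //=; rewrite /Psi /= -/(Psi s (map sumn gs)).
apply: leq_add => //; exact: psi_sub.
Qed.

Lemma size_groups (gs : seq (seq nat)) : (forall g, g \in gs -> g != [::]) ->
  size gs <= size (flatten gs).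
Proof.
elim: gs => //= g gs IH H; rewrite size_cat.
have : g != [::] by apply: H; rewrite inE eqxx.
rewrite -size_eq0 => hg.
have : size gs <= size (flatten gs).
  by apply: IH => g' hg'; apply: H; rewrite inE hg' orbT.
move: hg; case: (size g) => //= k _; lia.
Qed.

Lemma ar1 n s : n + U n s + s.+1 <= (n - s.+1) * (2 ^ s.+1 - 1) + 2 ^ s.+1.
Proof.
elim: s => [|s IH]; first by rewrite /= expn1; lia.
rewrite /= (expnS 2 s.+1).
have hX := expn_gt0 2 s.+1.
move: IH; set X := 2 ^ s.+1; set u := U n s => IH.
case: (leqP (s.+2) n) => h.
- have e : n - s.+1 = (n - s.+2).+1 by lia.
  rewrite e in IH; move: IH; set K := n - s.+2 => IH.
  nia.
- have -> : n - s.+2 = 0 by lia.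
  move: IH; have -> : n - s.+1 = 0 by lia.
  lia.
Qed.

Lemma ar2 n s : n + U n s.+1 < (2 ^ s.+2 - 1) * (n - s.+2).+1.
Proof.
have := ar1 n s.+1; set Y := 2 ^ s.+2; set K := n - s.+2.
have hY := expn_gt0 2 s.+2. rewrite -/Y in hY.
nia.
Qed.

Definition Inv n p := size p <= n /\ (forall x, x \in p -> A_mersenne x) /\
  (forall s, cnt s.+2 p <= n - s.+2).

Lemma mers1 : A_mersenne 1.
Proof. by exists 0. Qed.

Lemma inv_step n p q : Inv n p -> agg_step n A_mersenne p q -> Inv n q.
Proof.
move=> [_ [HA Hc]] [Hs [rest [gs [Hp [Hg ->]]]]].
have HA1 : forall x, x \in 1 :: p -> A_mersenne x.
  move=> x; rewrite inE => /orP [/eqP -> | h]; [exact: mers1 | exact: HA].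
have HAq : forall x, x \in rest ++ map sumn gs -> A_mersenne x.
  move=> x; rewrite mem_cat => /orP [h | /mapP [g hg ->]].
  - apply: HA1; rewrite (perm_mem Hp) mem_cat h //.
  - by case: (Hg g hg).
split; [|split] => //.
- rewrite size_cat; have := perm_size Hp; rewrite /= size_cat => e.
  have := @size_groups gs (fun g hg => proj1 (Hg g hg)); rewrite size_map; lia.
- move=> s.
  have H1 := Psi_lower s.+2 (rest ++ map sumn gs).
  have H2 : Psi s.+2 (rest ++ map sumn gs) <= Psi s.+2 (1 :: p).
    rewrite (Psi_perm s.+2 _ _ Hp) !Psi_cat Psi_flatten leq_add2l; exact: Psi_merge.
  have H3 : Psi s.+2 (1 :: p) = 1 + Psi s.+2 p.
    rewrite /Psi /= /psi; congr (_ + _); have := expn_gt0 2 s.+2; rewrite (expnS 2 s.+1); move=> ?; lia.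
  have H4 := Psi_bound _ _ HA Hc s.+1.
  have H5 := ar2 n s.
  rewrite leqNgt; apply/negP => H6.
  have := leq_mul (leqnn (2 ^ s.+2 - 1)) H6; move: H1 H5; generalize (2 ^ s.+2 - 1) => K; move=> H1 H5 H7.
  have H8 : Psi s.+2 (1 :: p) <= n + U n s.+1.
    rewrite H3; apply: leq_trans (leq_add (leqnn 1) H4) _.
    by rewrite addnA leq_add2r add1n.
  have := leq_trans H1 (leq_trans H2 H8).
  move=> H9; have := leq_ltn_trans H9 (leq_trans H5 H7).
  by rewrite ltnn.
Qed.

Lemma reach_inv n p : agg_reachable n A_mersenne p -> Inv n p.
Proof.
elim=> [|p0 q _ IH Hst]; last exact: inv_step IH Hst.
split; [|split] => //.
Qed.

Lemma sum_Psi s p : (forall x, x \in p -> A_mersenne x) -> cnt s.+1 p = 0 ->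
  sumn p = Psi s p.
Proof.
move=> H0; elim: p H0 => [|x p IH] H //=.
rewrite /cnt /= => e.
have e1 : (2 ^ s.+1 - 1 <= x) = false by move: e; case: (2 ^ s.+1 - 1 <= x).
have e2 : count (fun v => 2 ^ s.+1 - 1 <= v) p = 0 by move: e; rewrite e1.
rewrite /Psi /= -/(Psi s p) -IH //; last by move=> y hy; apply: H; rewrite inE hy orbT.
have [i hi] : A_mersenne x by apply: H; rewrite inE eqxx.
rewrite /psi; congr (_ + _).
move: e1; rewrite hi; have e3 := expnS 2 s.
have h1 := expn_gt0 2 s. have h2 := expn_gt0 2 i.+1.
case: (exp_cases s i) => h he; lia.
Qed.

Fixpoint Lf (i : nat) : seq nat :=
  match i with 0 => [:: 1] | i'.+1 => (2 ^ i'.+1 - 1) :: Lf i' end.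

Lemma sum_Lf i : sumn (Lf i) + i.+1 = 2 ^ i.+1.
Proof.
elim: i => [|i IH] //=.
have := expn_gt0 2 i.+1; rewrite (expnS 2 i.+1); lia.
Qed.

Lemma one_step n P rest g : agg_reachable n A_mersenne P -> size P < n ->
  perm_eq (1 :: P) (rest ++ g) -> g != [::] -> A_mersenne (sumn g) ->
  agg_reachable n A_mersenne (rest ++ [:: sumn g]).
Proof.
move=> Hr Hs Hp Hg Hx.
apply: (agg_reach_step Hr); split => //.
exists rest, [:: g]; split; first by rewrite /= cats0.
split => //.
by move=> g'; rewrite inE => /eqP ->.
Qed.

Lemma Hlem n j : forall p, agg_reachable n A_mersenne p -> size p + j.+2 <= n ->
  agg_reachable n A_mersenne (p ++ [:: 2 ^ j.+1 - 1]).
Proof.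
elim: j => [|j IH] p Hr Hs.
- have -> : 2 ^ 1 - 1 = sumn [:: 1] by [].
  apply: (@one_step n p p [:: 1] Hr) => //; first by lia.
  + by rewrite cats1 perm_sym perm_rcons.
  + by exists 0.
- have R1 := IH p Hr (ltac:(lia)).
  have R2 := IH _ R1 (ltac:(rewrite size_cat /=; lia)).
  rewrite -catA /= in R2.
  have e : 2 ^ j.+2 - 1 = sumn [:: 1; 2 ^ j.+1 - 1; 2 ^ j.+1 - 1].
    rewrite /= (expnS 2 j.+1); have := expn_gt0 2 j.+1; lia.
  rewrite e; apply: (@one_step n _ p _ R2) => //.
  + rewrite size_cat /=; lia.
  + by rewrite -(cat1s 1 (p ++ _)) perm_catCA.
  + rewrite -e; by exists j.+1.
Qed.

Lemma Glem n i : forall p, agg_reachable n A_mersenne p -> size p + i.+1 <= n ->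
  agg_reachable n A_mersenne (p ++ Lf i).
Proof.
elim: i => [|i IH] p Hr Hs.
- have -> : Lf 0 = [:: sumn [:: 1]] by [].
  apply: (@one_step n p p [:: 1] Hr) => //; first by lia.
  + by rewrite cats1 perm_sym perm_rcons.
  + by exists 0.
- have R1 := Hlem n i p Hr (ltac:(lia)).
  have R2 := IH _ R1 (ltac:(rewrite size_cat /=; lia)).
  by rewrite -catA /= in R2.
Qed.

Theorem mainTheorem15 (n : nat) : 1 <= n -> Total_is n A_mersenne (2 ^ n - n).
Proof.
case: n => [//|m] _; split.
- move=> p /reach_inv [Hs [HA Hc]].
  have Hc0 : cnt m.+2 p = 0 by have := Hc m; lia.
  rewrite (sum_Psi _ _ HA Hc0).
  have H1 := Psi_bound _ _ HA Hc m.
  have H2 := ar1 m.+1 m.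
  move: H1 H2; rewrite subnn mul0n add0n.
  move: (Psi m.+1 p) (U m.+1 m) => a b; lia.
- exists ([::] ++ Lf m); split.
  + apply: Glem => //; exact: agg_reach_init.
  + have := sum_Lf m; rewrite cat0s; lia.
Qed.
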